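(* Let $m_1,m_2,m_3,m_4>0$, $M=\sum m_i$, and for $\mathbf{r}=(r_{12},r_{13},r_{14},r_{23},r_{24},r_{34})$ let $U(\mathbf{r})=\sum_{i<j}\frac{m_im_j}{r_{ij}}$, $I(\mathbf{r})=\frac{1}{2M}\sum_{i<j}m_im_jr_{ij}^2$, $P(\mathbf{r})=r_{12}r_{34}+r_{14}r_{23}-r_{13}r_{24}$, and $\mathcal{M}^+=\{\mathbf{r}\in[0,\infty)^6: I(\mathbf{r})=1,\ P(\mathbf{r})=0\}$. Then the function $U|_{\mathcal{M}^+}$ has a unique critical point on $\mathcal{M}^+$.
   Context: $U=+\infty$ where some $r_{ij}=0$ (the boundary of $\mathcal{M}^+$); the set of points of $\mathcal{M}^+$ with all $r_{ij}>0$ is a smooth 4-dimensional manifold, and a critical point of $U|_{\mathcal{M}^+}$ is a point there at which the gradient of $U$ is a linear combination of the gradients of $I$ and $P$. *)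

(* Defs.v *)
From Stdlib Require Import Reals Lra.
From Coquelicot Require Import Coquelicot.
Open Scope R_scope.

Record conf := mkconf { r12 : R; r13 : R; r14 : R; r23 : R; r24 : R; r34 : R }.

Definition coord (k : nat) (x : conf) : R :=
  match k with
  | 0%nat => r12 x | 1%nat => r13 x | 2%nat => r14 x
  | 3%nat => r23 x | 4%nat => r24 x | _ => r34 x
  end.

Definition setc (k : nat) (t : R) (x : conf) : conf :=
  match k with
  | 0%nat => mkconf t (r13 x) (r14 x) (r23 x) (r24 x) (r34 x)
  | 1%nat => mkconf (r12 x) t (r14 x) (r23 x) (r24 x) (r34 x)
  | 2%nat => mkconf (r12 x) (r13 x) t (r23 x) (r24 x) (r34 x)
  | 3%nat => mkconf (r12 x) (r13 x) (r14 x) t (r24 x) (r34 x)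
  | 4%nat => mkconf (r12 x) (r13 x) (r14 x) (r23 x) t (r34 x)
  | _ => mkconf (r12 x) (r13 x) (r14 x) (r23 x) (r24 x) t
  end.

Definition partial (F : conf -> R) (k : nat) (x : conf) : R :=
  Derive (fun t => F (setc k t x)) (coord k x).

Definition Mtot (m1 m2 m3 m4 : R) : R := m1 + m2 + m3 + m4.

Definition Upot (m1 m2 m3 m4 : R) (x : conf) : R :=
  m1 * m2 / r12 x + m1 * m3 / r13 x + m1 * m4 / r14 x
  + m2 * m3 / r23 x + m2 * m4 / r24 x + m3 * m4 / r34 x.

Definition Imom (m1 m2 m3 m4 : R) (x : conf) : R :=
  / (2 * Mtot m1 m2 m3 m4) *
  (m1 * m2 * r12 x ^ 2 + m1 * m3 * r13 x ^ 2 + m1 * m4 * r14 x ^ 2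
   + m2 * m3 * r23 x ^ 2 + m2 * m4 * r24 x ^ 2 + m3 * m4 * r34 x ^ 2).

Definition Pcay (x : conf) : R :=
  r12 x * r34 x + r14 x * r23 x - r13 x * r24 x.

Definition in_Mplus (m1 m2 m3 m4 : R) (x : conf) : Prop :=
  0 <= r12 x /\ 0 <= r13 x /\ 0 <= r14 x /\ 0 <= r23 x /\ 0 <= r24 x /\ 0 <= r34 x
  /\ Imom m1 m2 m3 m4 x = 1 /\ Pcay x = 0.

Definition critical_point (m1 m2 m3 m4 : R) (x : conf) : Prop :=
  in_Mplus m1 m2 m3 m4 x
  /\ 0 < r12 x /\ 0 < r13 x /\ 0 < r14 x /\ 0 < r23 x /\ 0 < r24 x /\ 0 < r34 x
  /\ exists lam mu : R, forall k : nat, (k < 6)%nat ->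
       partial (Upot m1 m2 m3 m4) k x
       = lam * partial (Imom m1 m2 m3 m4) k x + mu * partial Pcay k x.

(* Main.v *)
Require Import Defs.
From Stdlib Require Import Reals.
From Coquelicot Require Import Coquelicot.
From Stdlib Require Import Lra Lia Ranalysis5.
Open Scope R_scope.

Lemma cpt_cont f x : continuity_pt f x <-> continuous f x.
Proof. unfold continuous. apply continuity_pt_filterlim. Qed.

Lemma inv_cont (F g : R -> R) (D : R -> Prop) y1 y y2 :
  (forall a b c, D a -> D c -> a <= b <= c -> D b) ->
  (forall a b, D a -> D b -> a < b -> F a < F b) ->
  (forall a, D a -> continuity_pt F a) ->
  y1 < y < y2 ->
  (forall u, y1 <= u <= y2 -> D (g u) /\ F (g u) = u) ->
  continuity_pt g y.
Proof.
  intros Dc Fm Fc Hy Hg.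
  destruct (Hg y1) as [D1 F1]; [lra|].
  destruct (Hg y2) as [D2 F2]; [lra|].
  assert (Hlt : g y1 < g y2).
  { destruct (Rlt_le_dec (g y1) (g y2)) as [h|h]; auto.
    destruct (Rle_lt_or_eq_dec _ _ h) as [h'|h'].
    - pose proof (Fm _ _ D2 D1 h'). lra.
    - rewrite h' in F2. lra. }
  apply (continuity_pt_recip_interv F g (g y1) (g y2) Hlt).
  - intros a b Ha Hab Hb. apply Fm; auto.
    + apply (Dc (g y1) a (g y2)); auto; lra.
    + apply (Dc (g y1) b (g y2)); auto; lra.
  - intros u Hu1 Hu2. unfold comp, id. rewrite F1 in Hu1. rewrite F2 in Hu2.
    apply Hg; lra.
  - intros u Hu1 Hu2. rewrite F1 in Hu1. rewrite F2 in Hu2.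
    destruct (Hg u) as [Du Fu]; [lra|].
    split.
    + destruct (Rle_lt_dec (g y1) (g u)) as [h|h]; auto.
      pose proof (Fm _ _ Du D1 h). lra.
    + destruct (Rle_lt_dec (g u) (g y2)) as [h|h]; auto.
      pose proof (Fm _ _ D2 Du h). lra.
  - intros a Ha. apply Fc. apply (Dc (g y1) a (g y2)); auto.
  - lra.
Qed.

Definition hf (s : R) : R := s ^ 2 - / s.

Lemma hf_incr x y : 0 < x -> x < y -> hf x < hf y.
Proof.
  intros Hx Hxy. unfold hf.
  assert (/ y < / x) by (apply Rinv_lt_contravar; nra).
  nra.
Qed.

Lemma hf_cont x : 0 < x -> continuity_pt hf x.
Proof.
  intros Hx. apply cpt_cont. apply (ex_derive_continuous (K:=R_AbsRing) (V:=R_NormedModule)). unfold hf.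
  auto_derive. lra.
Qed.

Lemma ex_psi (y : R) : { s | 0 < s /\ hf s = y }.
Proof.
  set (a := Rabs y + 2).
  assert (Ha : 2 <= a) by (unfold a; pose proof (Rabs_pos y); lra).
  assert (Hae : a = Rabs y + 2) by reflexivity. clearbody a.
  assert (Hy1 : - Rabs y <= y) by (unfold Rabs; destruct Rcase_abs; lra).
  assert (Hy2 : y <= Rabs y) by (apply Rle_abs).
  assert (H0 : 0 < / a) by (apply Rinv_0_lt_compat; lra).
  assert (H1 : / a <= 1/2) by (unfold Rdiv; rewrite Rmult_1_l; apply Rinv_le_contravar; lra).
  destruct (f_interv_is_interv hf (/ a) a y) as [s [Hs1 Hs2]].
  - lra.
  - split.
    + unfold hf. rewrite Rinv_inv. nra.
    + unfold hf. assert (/ a <= 1/2) by auto. nra.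
  - intros z Hz. apply hf_cont. lra.
  - exists s. split; [lra| auto].
Qed.

Definition psi (y : R) : R := proj1_sig (ex_psi y).
Lemma psi_pos y : 0 < psi y.
Proof. unfold psi. destruct (ex_psi y) as [s [H1 H2]]. simpl. auto. Qed.
Lemma hf_psi y : hf (psi y) = y.
Proof. unfold psi. destruct (ex_psi y) as [s [H1 H2]]. simpl. auto. Qed.
Lemma psi_incr y z : y < z -> psi y < psi z.
Proof.
  intros H. destruct (Rlt_le_dec (psi y) (psi z)) as [h|h]; auto.
  destruct (Rle_lt_or_eq_dec _ _ h) as [h'|h'].
  - pose proof (hf_incr _ _ (psi_pos z) h'). rewrite !hf_psi in H0. lra.
  - pose proof (hf_psi y). pose proof (hf_psi z). rewrite h' in H1. lra.
Qed.
Lemma psi_cont y : continuity_pt psi y.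
Proof.
  apply (inv_cont hf psi (fun s => 0 < s) (y-1) y (y+1)).
  - intros; lra.
  - intros; apply hf_incr; auto.
  - intros; apply hf_cont; auto.
  - lra.
  - intros; split; [apply psi_pos| apply hf_psi].
Qed.
Lemma psi_contc y : continuous psi y.
Proof. apply cpt_cont, psi_cont. Qed.

Lemma psi_le1 y : y <= 0 -> psi y <= 1.
Proof.
  intros H. destruct (Rle_lt_dec (psi y) 1) as [h|h]; auto.
  pose proof (hf_incr 1 (psi y) Rlt_0_1 h). rewrite hf_psi in H0.
  unfold hf in H0. simpl in H0. rewrite Rinv_1 in H0. lra.
Qed.
Lemma psi_lt1 y : y < 0 -> psi y < 1.
Proof.
  intros H. destruct (Rlt_le_dec (psi y) 1) as [h|h]; auto.
  destruct (Rle_lt_or_eq_dec _ _ h) as [h'|h'].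
  - pose proof (hf_incr 1 (psi y) Rlt_0_1 h'). rewrite hf_psi in H0.
    unfold hf in H0. simpl in H0. rewrite Rinv_1 in H0. lra.
  - pose proof (hf_psi y). rewrite <- h' in H0. unfold hf in H0. simpl in H0. rewrite Rinv_1 in H0. lra.
Qed.
Lemma psi_gt1 y : 0 < y -> 1 < psi y.
Proof.
  intros H. destruct (Rlt_le_dec 1 (psi y)) as [h|h]; auto.
  destruct (Rle_lt_or_eq_dec _ _ h) as [h'|h'].
  - pose proof (hf_incr (psi y) 1 (psi_pos y) h'). rewrite hf_psi in H0.
    unfold hf in H0. simpl in H0. rewrite Rinv_1 in H0. lra.
  - pose proof (hf_psi y). rewrite h' in H0. unfold hf in H0. simpl in H0. rewrite Rinv_1 in H0. lra.
Qed.

Definition Nf (al be t : R) : R := t / (psi (- t / al) * psi (- t / be)).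

Lemma den_pos al be t : 0 < psi (- t / al) * psi (- t / be).
Proof. pose proof (psi_pos (-t/al)); pose proof (psi_pos (-t/be)); nra. Qed.

Lemma lin_cont c t : continuous (fun t => - t / c) t.
Proof. apply (ex_derive_continuous (K:=R_AbsRing) (V:=R_NormedModule)). auto_derive. auto. Qed.

Lemma Nf_contc al be t : continuous (Nf al be) t.
Proof.
  unfold Nf.
  apply (continuous_mult (fun t => t) (fun t => / (psi (- t / al) * psi (- t / be)))).
  - apply continuous_id.
  - apply continuous_Rinv_comp.
    + apply (continuous_mult (fun t => psi (- t / al)) (fun t => psi (-t/be))).
      * apply (continuous_comp (fun t => - t / al) psi). 2: apply psi_contc.
        apply lin_cont.
      * apply (continuous_comp (fun t => - t / be) psi). 2: apply psi_contc.
        apply lin_cont.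
    + pose proof (den_pos al be t). lra.
Qed.

Lemma negdiv t a : 0 <= t -> 0 < a -> - t / a <= 0.
Proof. intros. replace (-t/a) with (-(t/a)) by (unfold Rdiv; ring).
  assert (0 <= t/a) by (apply Rdiv_le_0_compat; lra). lra. Qed.

Lemma Nf_ge al be t : 0 < al -> 0 < be -> 0 <= t -> t <= Nf al be t.
Proof.
  intros Ha Hb Ht. unfold Nf.
  assert (H1 : psi (-t/al) <= 1) by (apply psi_le1; apply negdiv; lra).
  assert (H2 : psi (-t/be) <= 1) by (apply psi_le1; apply negdiv; lra).
  pose proof (den_pos al be t). pose proof (psi_pos (-t/al)). pose proof (psi_pos (-t/be)).
  set (p := psi (- t / al)) in *. set (q := psi (- t / be)) in *. clearbody p q.
  apply (Rmult_le_reg_r (p * q)); auto.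
  unfold Rdiv. rewrite Rmult_assoc, Rinv_l by lra. rewrite Rmult_1_r.
  assert (p * q <= 1) by nra. nra.
Qed.

Lemma Nf_0 al be : Nf al be 0 = 0.
Proof. unfold Nf, Rdiv. ring. Qed.

Lemma Nf_incr al be t u : 0 < al -> 0 < be -> 0 <= t -> t < u -> Nf al be t < Nf al be u.
Proof.
  intros Ha Hb Ht Hu. unfold Nf.
  assert (E1 : - u / al < - t / al) by (unfold Rdiv; apply Rmult_lt_compat_r; [apply Rinv_0_lt_compat|]; lra).
  assert (E2 : - u / be < - t / be) by (unfold Rdiv; apply Rmult_lt_compat_r; [apply Rinv_0_lt_compat|]; lra).
  pose proof (psi_incr _ _ E1). pose proof (psi_incr _ _ E2).
  pose proof (psi_pos (-u/al)). pose proof (psi_pos (-u/be)).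
  set (D1 := psi (- t / al) * psi (- t / be)) in *.
  set (D2 := psi (- u / al) * psi (- u / be)) in *.
  assert (D2 < D1) by (unfold D1, D2; nra).
  assert (0 < D2) by (unfold D2; nra).
  apply (Rmult_lt_reg_r (D1 * D2)). nra.
  unfold Rdiv. replace (t * / D1 * (D1 * D2)) with (t * D2) by (field; lra).
  replace (u * / D2 * (D1 * D2)) with (u * D1) by (field; lra). nra.
Qed.

Lemma ex_Ninv al be (Ha : 0 < al) (Hb : 0 < be) y : { t | 0 <= t /\ (0 <= y -> Nf al be t = y) }.
Proof.
  destruct (Rlt_le_dec 0 y) as [h|h].
  - destruct (f_interv_is_interv (Nf al be) 0 y y h) as [t [Ht1 Ht2]].
    + rewrite Nf_0. split; [lra|]. apply Nf_ge; lra.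
    + intros; apply cpt_cont, Nf_contc.
    + exists t. split; [lra| auto].
  - exists 0. split; [lra|]. intros. rewrite Nf_0. lra.
Qed.

Definition Ninv al be (Ha : 0 < al) (Hb : 0 < be) y := proj1_sig (ex_Ninv al be Ha Hb y).
Lemma Ninv_spec al be Ha Hb y : 0 <= Ninv al be Ha Hb y /\ (0 <= y -> Nf al be (Ninv al be Ha Hb y) = y).
Proof. unfold Ninv. destruct (ex_Ninv al be Ha Hb y). simpl. auto. Qed.

Lemma Ninv_cont al be Ha Hb y : 0 < y -> continuous (Ninv al be Ha Hb) y.
Proof.
  intros Hy. apply cpt_cont.
  apply (inv_cont (Nf al be) (Ninv al be Ha Hb) (fun t => 0 <= t) (y/2) y (2*y)).
  - intros; lra.
  - intros; apply Nf_incr; auto.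
  - intros; apply cpt_cont, Nf_contc.
  - lra.
  - intros u Hu. destruct (Ninv_spec al be Ha Hb u) as [H1 H2]. split; auto. apply H2. lra.
Qed.

Definition nsol (p12 p13 p14 p23 p24 p34 : R) (s : conf) (nu : R) : Prop :=
  0 < r12 s /\ 0 < r13 s /\ 0 < r14 s /\ 0 < r23 s /\ 0 < r24 s /\ 0 < r34 s /\
  Pcay s = 0 /\
  p12 * (/ r12 s ^ 2 - r12 s) = nu * r34 s /\
  p13 * (/ r13 s ^ 2 - r13 s) = - nu * r24 s /\
  p14 * (/ r14 s ^ 2 - r14 s) = nu * r23 s /\
  p23 * (/ r23 s ^ 2 - r23 s) = nu * r14 s /\
  p24 * (/ r24 s ^ 2 - r24 s) = - nu * r13 s /\
  p34 * (/ r34 s ^ 2 - r34 s) = nu * r12 s.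

Definition nu3 al be tau := tau / (psi (tau / al) * psi (tau / be)).
Definition sideA al be Ha Hb nu :=
  psi (- Ninv al be Ha Hb nu / al) * psi (- Ninv al be Ha Hb nu / be).

Lemma posdiv t a : 0 < t -> 0 < a -> 0 < t / a.
Proof. intros. apply Rdiv_lt_0_compat; auto. Qed.
Lemma negdiv' t a : 0 < t -> 0 < a -> - t / a < 0.
Proof. intros. replace (-t/a) with (-(t/a)) by (unfold Rdiv; ring).
  assert (0 < t/a) by (apply Rdiv_lt_0_compat; lra). lra. Qed.

Lemma side_pair al be Ha Hb nu : 0 < nu ->
  let t := Ninv al be Ha Hb nu in
  let a := psi (- t / al) in let b := psi (- t / be) in
  0 < t /\ 0 < a < 1 /\ 0 < b < 1 /\ t = nu * a * b /\
  al * (/ a ^ 2 - a) = nu * b /\ be * (/ b ^ 2 - b) = nu * a.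
Proof.
  intros Hnu t a b.
  destruct (Ninv_spec al be Ha Hb nu) as [Ht0 HN]. fold t in Ht0, HN.
  specialize (HN (Rlt_le _ _ Hnu)).
  assert (Ht : 0 < t).
  { destruct (Rle_lt_or_eq_dec _ _ Ht0) as [h|h]; auto. rewrite <- h in HN. rewrite Nf_0 in HN. lra. }
  assert (Ha1 : 0 < a < 1) by (split; [apply psi_pos| apply psi_lt1, negdiv'; auto]).
  assert (Hb1 : 0 < b < 1) by (split; [apply psi_pos| apply psi_lt1, negdiv'; auto]).
  assert (Htab : t = nu * a * b).
  { unfold Nf in HN. fold a b in HN. rewrite <- HN. field. lra. }
  pose proof (hf_psi (- t / al)) as E1. fold a in E1. unfold hf in E1.
  pose proof (hf_psi (- t / be)) as E2. fold b in E2. unfold hf in E2.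
  repeat split; try lra.
  - apply (Rmult_eq_reg_r a); [|lra].
    replace (al * (/ a ^ 2 - a) * a) with (- (al * (a ^ 2 - / a))) by (field; lra).
    rewrite E1. replace (-(al*(-t/al))) with t by (field; lra). rewrite Htab. ring.
  - apply (Rmult_eq_reg_r b); [|lra].
    replace (be * (/ b ^ 2 - b) * b) with (- (be * (b ^ 2 - / b))) by (field; lra).
    rewrite E2. replace (-(be*(-t/be))) with t by (field; lra). rewrite Htab. ring.
Qed.

Lemma diag_pair al be tau : 0 < al -> 0 < be -> 0 < tau ->
  let e := psi (tau / al) in let g := psi (tau / be) in
  1 < e /\ 1 < g /\ 0 < nu3 al be tau /\ tau = nu3 al be tau * e * g /\
  al * (/ e ^ 2 - e) = - nu3 al be tau * g /\ be * (/ g ^ 2 - g) = - nu3 al be tau * e.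
Proof.
  intros Ha Hb Ht e g.
  assert (He : 1 < e) by (apply psi_gt1, posdiv; auto).
  assert (Hg : 1 < g) by (apply psi_gt1, posdiv; auto).
  assert (Hn : tau = nu3 al be tau * e * g) by (unfold nu3; fold e g; field; lra).
  assert (Hnp : 0 < nu3 al be tau) by (unfold nu3; fold e g; apply posdiv; nra).
  pose proof (hf_psi (tau / al)) as E1. fold e in E1. unfold hf in E1.
  pose proof (hf_psi (tau / be)) as E2. fold g in E2. unfold hf in E2.
  set (nu := nu3 al be tau) in *. clearbody nu.
  repeat split; try lra.
  - apply (Rmult_eq_reg_r e); [|lra].
    replace (al * (/ e ^ 2 - e) * e) with (- (al * (e ^ 2 - / e))) by (field; lra).
    rewrite E1. replace (-(al*(tau/al))) with (-tau) by (field; lra). rewrite Hn at 1. ring.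
  - apply (Rmult_eq_reg_r g); [|lra].
    replace (be * (/ g ^ 2 - g) * g) with (- (be * (g ^ 2 - / g))) by (field; lra).
    rewrite E2. replace (-(be*(tau/be))) with (-tau) by (field; lra). rewrite Hn at 1. ring.
Qed.

Lemma poly_of al a w : 0 < a -> al * (/ a ^ 2 - a) = w -> al * (1 - a ^ 3) = w * a ^ 2.
Proof. intros Ha H. rewrite <- H. field. lra. Qed.

Lemma cube_ge a : 0 < a -> 7/8 <= a ^ 3 -> 19/20 <= a.
Proof. intros Ha H. destruct (Rle_lt_dec (19/20) a) as [h|h]; auto.
  assert (a^3 < (19/20)^3). { simpl. assert (a*a < 19/20*(19/20)) by nra. nra. } simpl in H0. lra. Qed.

Lemma cube_le e : 0 < e -> e ^ 3 * (7/8) <= 1 -> e <= 21/20.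
Proof. intros He H. destruct (Rle_lt_dec e (21/20)) as [h|h]; auto.
  assert ((21/20)^3 < e^3). { simpl. assert (21/20*(21/20) < e*e) by nra. nra. } simpl in H0. lra. Qed.

Lemma side_bound al be Ha Hb nu : 0 < nu -> nu <= al / 8 -> nu <= be / 8 ->
  0.9025 <= sideA al be Ha Hb nu /\ sideA al be Ha Hb nu <= 1.
Proof.
  intros Hn H1 H2. unfold sideA.
  destruct (side_pair al be Ha Hb nu Hn) as (Ht & Ha1 & Hb1 & Htab & E1 & E2).
  set (t := Ninv al be Ha Hb nu) in *.
  set (a := psi (- t / al)) in *. set (b := psi (- t / be)) in *. clearbody a b t.
  apply poly_of in E1; [|lra]. apply poly_of in E2; [|lra].
  assert (a^2*b <= 1) by (simpl; nra).
  assert (b^2*a <= 1) by (simpl; nra).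
  assert (7/8 <= a^3) by nra.
  assert (7/8 <= b^3) by nra.
  apply cube_ge in H3; [|lra]. apply cube_ge in H4; [|lra]. split; nra.
Qed.

Lemma diag_bound al be tau : 0 < al -> 0 < be -> 0 < tau -> nu3 al be tau <= al / 8 -> nu3 al be tau <= be / 8 ->
  psi (tau / al) * psi (tau / be) <= 1.1025.
Proof.
  intros Ha Hb Ht H1 H2.
  destruct (diag_pair al be tau Ha Hb Ht) as (He & Hg & Hn & Hte & E1 & E2).
  set (nu := nu3 al be tau) in *.
  set (e := psi (tau / al)) in *. set (g := psi (tau / be)) in *. clearbody e g nu.
  apply poly_of in E1; [|lra]. apply poly_of in E2; [|lra].
  destruct (Rle_lt_dec g e) as [h|h].
  - assert (e^2*g <= e^3) by (simpl; nra).
    assert (0 < e^3) by (simpl; nra).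
    assert (nu*(e^2*g) <= nu*e^3) by (apply Rmult_le_compat_l; lra).
    assert (nu*e^3 <= al/8*e^3) by (apply Rmult_le_compat_r; lra).
    assert (al * (e^3 - 1) <= al / 8 * e^3) by nra.
    assert (e ^ 3 * (7/8) <= 1) by nra.
    match goal with H : _ * (7/8) <= 1 |- _ => apply cube_le in H; [|lra] end. nra.
  - assert (g^2*e <= g^3) by (simpl; nra).
    assert (0 < g^3) by (simpl; nra).
    assert (nu*(g^2*e) <= nu*g^3) by (apply Rmult_le_compat_l; lra).
    assert (nu*g^3 <= be/8*g^3) by (apply Rmult_le_compat_r; lra).
    assert (be * (g^3 - 1) <= be / 8 * g^3) by nra.
    assert (g ^ 3 * (7/8) <= 1) by nra.
    match goal with H : _ * (7/8) <= 1 |- _ => apply cube_le in H; [|lra] end. nra.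
Qed.

Lemma sideA_le1 al be Ha Hb nu : 0 < nu -> 0 < sideA al be Ha Hb nu <= 1.
Proof.
  intros Hn. unfold sideA.
  destruct (side_pair al be Ha Hb nu Hn) as (Ht & Ha1 & Hb1 & _).
  split; nra.
Qed.

Lemma psi_ge2 y : 4 <= y -> 2 <= psi y.
Proof.
  intros H. destruct (Rle_lt_dec 2 (psi y)) as [h|h]; auto.
  pose proof (hf_incr _ _ (psi_pos y) h). rewrite hf_psi in H0. unfold hf in H0.
  simpl in H0. lra.
Qed.

Lemma lin2_cont c t : continuous (fun t => t / c) t.
Proof. apply (ex_derive_continuous (K:=R_AbsRing) (V:=R_NormedModule)). auto_derive. auto. Qed.

Lemma pp_cont al be t : continuous (fun t => psi (t / al) * psi (t / be)) t.
Proof.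
  apply (continuous_mult (fun t => psi (t / al)) (fun t => psi (t/be))).
  - apply (continuous_comp (fun t => t / al) psi). apply lin2_cont. apply psi_contc.
  - apply (continuous_comp (fun t => t / be) psi). apply lin2_cont. apply psi_contc.
Qed.

Lemma nu3_cont al be t : continuous (nu3 al be) t.
Proof.
  unfold nu3.
  apply (continuous_mult (fun t => t) (fun t => / (psi (t / al) * psi (t / be)))).
  - apply continuous_id.
  - apply continuous_Rinv_comp. apply pp_cont.
    pose proof (psi_pos (t/al)); pose proof (psi_pos (t/be)). nra.
Qed.

Lemma sideA_cont al be Ha Hb nu : 0 < nu -> continuous (sideA al be Ha Hb) nu.
Proof.
  intros Hn. unfold sideA.
  apply (continuous_mult (fun nu => psi (- Ninv al be Ha Hb nu / al)) (fun nu => psi (- Ninv al be Ha Hb nu / be))).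
  - apply (continuous_comp (fun nu => - Ninv al be Ha Hb nu / al) psi); [|apply psi_contc].
    apply (continuous_comp (Ninv al be Ha Hb) (fun t => - t / al)). apply Ninv_cont; auto. apply lin_cont.
  - apply (continuous_comp (fun nu => - Ninv al be Ha Hb nu / be) psi); [|apply psi_contc].
    apply (continuous_comp (Ninv al be Ha Hb) (fun t => - t / be)). apply Ninv_cont; auto. apply lin_cont.
Qed.

Lemma nsol_exists p12 p13 p14 p23 p24 p34 :
  0 < p12 -> 0 < p13 -> 0 < p14 -> 0 < p23 -> 0 < p24 -> 0 < p34 ->
  exists s nu, nsol p12 p13 p14 p23 p24 p34 s nu.
Proof.
  intros H12 H13 H14 H23 H24 H34.
  set (m := Rmin (Rmin (Rmin p12 p13) (Rmin p14 p23)) (Rmin p24 p34)).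
  assert (Hm : 0 < m /\ m <= p12 /\ m <= p13 /\ m <= p14 /\ m <= p23 /\ m <= p24 /\ m <= p34).
  { unfold m.
    pose proof (Rmin_l (Rmin (Rmin p12 p13) (Rmin p14 p23)) (Rmin p24 p34)).
    pose proof (Rmin_r (Rmin (Rmin p12 p13) (Rmin p14 p23)) (Rmin p24 p34)).
    pose proof (Rmin_l (Rmin p12 p13) (Rmin p14 p23)). pose proof (Rmin_r (Rmin p12 p13) (Rmin p14 p23)).
    pose proof (Rmin_l p12 p13). pose proof (Rmin_r p12 p13).
    pose proof (Rmin_l p14 p23). pose proof (Rmin_r p14 p23).
    pose proof (Rmin_l p24 p34). pose proof (Rmin_r p24 p34).
    repeat split; try lra.
    repeat apply Rmin_glb_lt; auto. }
  clearbody m.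
  set (G := fun tau => sideA p12 p34 H12 H34 (nu3 p13 p24 tau) + sideA p14 p23 H14 H23 (nu3 p13 p24 tau)
                       - psi (tau / p13) * psi (tau / p24)).
  set (t0 := m / 8). set (t1 := 4 * (p13 + p24)).
  assert (Ht0 : 0 < t0) by (unfold t0; lra).
  assert (Ht01 : t0 < t1) by (unfold t0, t1; lra).
  assert (HG0 : 0 < G t0).
  { destruct (diag_pair p13 p24 t0 H13 H24 Ht0) as (He & Hg & Hn & Hte & _).
    set (nu := nu3 p13 p24 t0) in *.
    assert (nu <= t0).
    { set (e := psi (t0 / p13)) in *. set (g := psi (t0 / p24)) in *.
      assert (1 < e * g) by nra. rewrite Hte. rewrite Rmult_assoc. 
      assert (nu * 1 <= nu * (e * g)) by (apply Rmult_le_compat_l; lra). lra. }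
    assert (nu <= m / 8) by (unfold t0 in *; lra).
    pose proof (side_bound p12 p34 H12 H34 nu Hn ltac:(lra) ltac:(lra)).
    pose proof (side_bound p14 p23 H14 H23 nu Hn ltac:(lra) ltac:(lra)).
    pose proof (diag_bound p13 p24 t0 H13 H24 Ht0 ltac:(fold nu; lra) ltac:(fold nu; lra)).
    unfold G. fold nu. lra. }
  assert (HG1 : G t1 < 0).
  { destruct (diag_pair p13 p24 t1 H13 H24 ltac:(lra)) as (He & Hg & Hn & Hte & _).
    pose proof (sideA_le1 p12 p34 H12 H34 _ Hn).
    pose proof (sideA_le1 p14 p23 H14 H23 _ Hn).
    assert (2 <= psi (t1 / p13)).
    { apply psi_ge2. unfold t1. apply (Rmult_le_reg_r p13); auto. field_simplify; lra. }
    assert (2 <= psi (t1 / p24)).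
    { apply psi_ge2. unfold t1. apply (Rmult_le_reg_r p24); auto. field_simplify; lra. }
    unfold G. nra. }
  destruct (f_interv_is_interv (fun tau => - G tau) t0 t1 0 Ht01) as [tau [Htau HGt]].
  { lra. }
  { intros x Hx. apply cpt_cont.
    apply (continuous_opp G).
    unfold G.
    apply (continuous_minus (fun tau => sideA p12 p34 H12 H34 (nu3 p13 p24 tau) + sideA p14 p23 H14 H23 (nu3 p13 p24 tau))
              (fun tau => psi (tau / p13) * psi (tau / p24))); [|apply pp_cont].
    destruct (diag_pair p13 p24 x H13 H24 ltac:(lra)) as (_ & _ & Hn & _).
    apply (continuous_plus (fun tau => sideA p12 p34 H12 H34 (nu3 p13 p24 tau)) (fun tau => sideA p14 p23 H14 H23 (nu3 p13 p24 tau))).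
    - apply (continuous_comp (nu3 p13 p24) (sideA p12 p34 H12 H34)). apply nu3_cont. apply sideA_cont; auto.
    - apply (continuous_comp (nu3 p13 p24) (sideA p14 p23 H14 H23)). apply nu3_cont. apply sideA_cont; auto. }
  assert (HGz : G tau = 0) by lra.
  assert (Htp : 0 < tau) by lra.
  destruct (diag_pair p13 p24 tau H13 H24 Htp) as (He & Hg & Hn & Hte & Ee & Eg).
  set (nu := nu3 p13 p24 tau) in *.
  destruct (side_pair p12 p34 H12 H34 nu Hn) as (Hs1 & Ha1 & Hb1 & _ & Ea1 & Eb1).
  destruct (side_pair p14 p23 H14 H23 nu Hn) as (Hs2 & Ha2 & Hb2 & _ & Ea2 & Eb2).
  unfold G in HGz. fold nu in HGz. unfold sideA in HGz.
  set (a1 := psi (- Ninv p12 p34 H12 H34 nu / p12)) in *.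
  set (b1 := psi (- Ninv p12 p34 H12 H34 nu / p34)) in *.
  set (a2 := psi (- Ninv p14 p23 H14 H23 nu / p14)) in *.
  set (b2 := psi (- Ninv p14 p23 H14 H23 nu / p23)) in *.
  set (e := psi (tau / p13)) in *. set (g := psi (tau / p24)) in *.
  exists (mkconf a1 e a2 b2 g b1), nu.
  unfold nsol, Pcay; simpl.
  repeat split; try lra; auto.
Qed.

Lemma pair_side al a b nu : 0 < a -> al * (/ a ^ 2 - a) = nu * b -> al * (/ a - a ^ 2) = nu * a * b.
Proof. intros Ha H. replace (al * (/ a - a^2)) with (al * (/ a ^ 2 - a) * a) by (field; lra). rewrite H. ring. Qed.

Lemma pair_diag al a b nu : 0 < a -> al * (/ a ^ 2 - a) = - nu * b -> al * (a ^ 2 - / a) = nu * a * b.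
Proof. intros Ha H. replace (al * (a ^ 2 - / a)) with (- (al * (/ a ^ 2 - a) * a)) by (field; lra). rewrite H. ring. Qed.

Lemma fdec x y : 0 < x -> x < y -> / y - y ^ 2 < / x - x ^ 2.
Proof. intros. pose proof (hf_incr x y H H0). unfold hf in H1. lra. Qed.

Lemma side_cmp al be a b a' b' nu nu' :
  0 < al -> 0 < be -> 0 < a -> 0 < b -> 0 < a' -> 0 < b' -> 0 < nu -> nu <= nu' ->
  al * (/ a ^ 2 - a) = nu * b -> be * (/ b ^ 2 - b) = nu * a ->
  al * (/ a' ^ 2 - a') = nu' * b' -> be * (/ b' ^ 2 - b') = nu' * a' -> a' <= a.
Proof.
  intros Hal Hbe Ha Hb Ha' Hb' Hn Hnn E1 E2 E1' E2'.
  apply pair_side in E1; auto. apply pair_side in E2; auto.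
  apply pair_side in E1'; auto. apply pair_side in E2'; auto.
  destruct (Rle_lt_dec a' a) as [h|h]; auto. exfalso.
  pose proof (fdec a a' Ha h) as F1.
  assert (K1 : nu' * a' * b' < nu * a * b).
  { rewrite <- E1, <- E1'. apply Rmult_lt_compat_l; auto. }
  assert (Hbb : b < b').
  { destruct (Rle_lt_dec b' b) as [h'|h']; auto.
    destruct (Rle_lt_or_eq_dec _ _ h') as [h''|h''].
    - pose proof (fdec b' b Hb' h'') as F2.
      assert (be * (/ b - b^2) < be * (/ b' - b'^2)) by (apply Rmult_lt_compat_l; auto).
      lra.
    - subst. lra. }
  assert (nu * a * b < nu' * a' * b').
  { assert (a * b < a' * b') by nra.
    assert (nu * (a*b) < nu * (a' * b')) by (apply Rmult_lt_compat_l; auto).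
    assert (nu * (a'*b') <= nu' * (a' * b')) by (apply Rmult_le_compat_r; nra).
    nra. }
  lra.
Qed.

Lemma qinc x y : 0 < x -> x < y -> 1 - / x ^ 3 < 1 - / y ^ 3.
Proof. intros. 
  assert (x*x < y*y) by nra. assert (0 < x*x) by nra.
  assert (x*x*x < y*y*y) by nra.
  replace (x^3) with (x*x*x) by ring. replace (y^3) with (y*y*y) by ring.
  assert (0 < x*x*x) by nra.
  assert (/ (y*y*y) < / (x*x*x)) by (apply Rinv_lt_contravar; nra). lra. Qed.

Lemma diag_cmp al be a b a' b' nu nu' :
  0 < al -> 0 < be -> 0 < a -> 0 < b -> 0 < a' -> 0 < b' -> 0 < nu -> nu <= nu' ->
  al * (/ a ^ 2 - a) = - nu * b -> be * (/ b ^ 2 - b) = - nu * a ->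
  al * (/ a' ^ 2 - a') = - nu' * b' -> be * (/ b' ^ 2 - b') = - nu' * a' -> a <= a'.
Proof.
  intros Hal Hbe Ha Hb Ha' Hb' Hn Hnn E1 E2 E1' E2'.
  assert (Q : al * be * ((1 - / a ^ 3) * (1 - / b ^ 3)) = nu ^ 2).
  { replace (al * be * ((1 - / a ^ 3) * (1 - / b ^ 3))) with ((al * (/ a ^ 2 - a)) * (be * (/ b ^ 2 - b)) / (a * b)) by (field; lra).
    rewrite E1, E2. field; lra. }
  assert (Q' : al * be * ((1 - / a' ^ 3) * (1 - / b' ^ 3)) = nu' ^ 2).
  { replace (al * be * ((1 - / a' ^ 3) * (1 - / b' ^ 3))) with ((al * (/ a' ^ 2 - a')) * (be * (/ b' ^ 2 - b')) / (a' * b')) by (field; lra).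
    rewrite E1', E2'. field; lra. }
  assert (Pa' : al * (1 - / a' ^ 3) = nu' * b' / a').
  { replace (al * (1 - / a' ^ 3)) with (- (al * (/ a' ^ 2 - a')) / a') by (field; lra). rewrite E1'. field. lra. }
  assert (Pb' : be * (1 - / b' ^ 3) = nu' * a' / b').
  { replace (be * (1 - / b' ^ 3)) with (- (be * (/ b' ^ 2 - b')) / b') by (field; lra). rewrite E2'. field. lra. }
  assert (Qa : 0 < 1 - / a' ^ 3).
  { apply (Rmult_lt_reg_l al); auto. rewrite Pa'. rewrite Rmult_0_r. apply posdiv; nra. }
  assert (Qb : 0 < 1 - / b' ^ 3).
  { apply (Rmult_lt_reg_l be); auto. rewrite Pb'. rewrite Rmult_0_r. apply posdiv; nra. }
  apply pair_diag in E1; auto. apply pair_diag in E2; auto.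
  apply pair_diag in E1'; auto. apply pair_diag in E2'; auto.
  destruct (Rle_lt_dec a a') as [h|h]; auto. exfalso.
  pose proof (hf_incr a' a Ha' h) as F1. unfold hf in F1.
  assert (K1 : nu' * a' * b' < nu * a * b).
  { rewrite <- E1, <- E1'. apply Rmult_lt_compat_l; auto. }
  assert (Hbb : b' < b).
  { destruct (Rlt_le_dec b' b) as [h'|h']; auto.
    destruct (Rle_lt_or_eq_dec _ _ h') as [h''|h''].
    - pose proof (hf_incr b b' Hb h'') as F2. unfold hf in F2.
      assert (be * (b^2 - / b) < be * (b'^2 - / b')) by (apply Rmult_lt_compat_l; auto).
      lra.
    - subst. lra. }
  pose proof (qinc a' a Ha' h). pose proof (qinc b' b Hb' Hbb).
  set (qa := 1 - / a^3) in *. set (qb := 1 - / b^3) in *.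
  set (qa' := 1 - / a'^3) in *. set (qb' := 1 - / b'^3) in *.
  assert (qa' * qb' < qa * qb) by nra.
  assert (al * be * (qa' * qb') < al * be * (qa * qb)) by (apply Rmult_lt_compat_l; nra).
  assert (nu ^2 <= nu'^2) by (simpl; nra).
  lra.
Qed.

Lemma ge1_of al a w : 0 < al -> 0 < a -> w <= 0 -> al * (/ a ^ 2 - a) = w -> 1 <= a.
Proof.
  intros Hal Ha Hw E. destruct (Rle_lt_dec 1 a) as [h|h]; auto.
  assert (a * a < 1) by nra. assert (a*a*a < 1) by nra.
  assert (1 < / (a*a)) by (rewrite <- Rinv_1; apply Rinv_lt_contravar; nra).
  assert (/ a ^ 2 = / (a*a)) by (f_equal; ring).
  assert (0 < al * (/ a ^ 2 - a)) by (apply Rmult_lt_0_compat; lra). lra.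
Qed.

Lemma le1_of al a w : 0 < al -> 0 < a -> 0 <= w -> al * (/ a ^ 2 - a) = w -> a <= 1.
Proof.
  intros Hal Ha Hw E. destruct (Rle_lt_dec a 1) as [h|h]; auto.
  assert (1 < a * a) by nra.
  assert (/ (a*a) < 1) by (rewrite <- Rinv_1; apply Rinv_lt_contravar; nra).
  assert (/ a ^ 2 = / (a*a)) by (f_equal; ring).
  assert (al * (/ a ^ 2 - a) < 0) by (apply Rmult_pos_neg; lra). lra.
Qed.

Lemma nsol_nu_pos p12 p13 p14 p23 p24 p34 s nu :
  0 < p12 -> 0 < p13 -> 0 < p14 -> 0 < p23 -> 0 < p24 -> 0 < p34 ->
  nsol p12 p13 p14 p23 p24 p34 s nu -> 0 < nu.
Proof.
  intros H12 H13 H14 H23 H24 H34 (S1&S2&S3&S4&S5&S6&HP&E12&E13&E14&E23&E24&E34).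
  destruct (Rlt_le_dec 0 nu) as [h|h]; auto. exfalso.
  apply ge1_of in E12; auto; [|nra].
  apply ge1_of in E34; auto; [|nra].
  apply ge1_of in E14; auto; [|nra].
  apply ge1_of in E23; auto; [|nra].
  apply le1_of in E13; auto; [|nra].
  apply le1_of in E24; auto; [|nra].
  unfold Pcay in HP. nra.
Qed.

Lemma core_le p12 p13 p14 p23 p24 p34 s nu s' nu' :
  0 < p12 -> 0 < p13 -> 0 < p14 -> 0 < p23 -> 0 < p24 -> 0 < p34 ->
  nsol p12 p13 p14 p23 p24 p34 s nu -> nsol p12 p13 p14 p23 p24 p34 s' nu' -> nu <= nu' ->
  s = s'.
Proof.
  intros H12 H13 H14 H23 H24 H34 Hs Hs' Hnn.
  pose proof (nsol_nu_pos _ _ _ _ _ _ _ _ H12 H13 H14 H23 H24 H34 Hs) as Hn.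
  destruct Hs as (S1&S2&S3&S4&S5&S6&HP&E12&E13&E14&E23&E24&E34).
  destruct Hs' as (S1'&S2'&S3'&S4'&S5'&S6'&HP'&E12'&E13'&E14'&E23'&E24'&E34').
  pose proof (side_cmp _ _ _ _ _ _ _ _ H12 H34 S1 S6 S1' S6' Hn Hnn E12 E34 E12' E34') as L1.
  pose proof (side_cmp _ _ _ _ _ _ _ _ H34 H12 S6 S1 S6' S1' Hn Hnn E34 E12 E34' E12') as L6.
  pose proof (side_cmp _ _ _ _ _ _ _ _ H14 H23 S3 S4 S3' S4' Hn Hnn E14 E23 E14' E23') as L3.
  pose proof (side_cmp _ _ _ _ _ _ _ _ H23 H14 S4 S3 S4' S3' Hn Hnn E23 E14 E23' E14') as L4.
  pose proof (diag_cmp _ _ _ _ _ _ _ _ H13 H24 S2 S5 S2' S5' Hn Hnn E13 E24 E13' E24') as L2.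
  pose proof (diag_cmp _ _ _ _ _ _ _ _ H24 H13 S5 S2 S5' S2' Hn Hnn E24 E13 E24' E13') as L5.
  unfold Pcay in HP, HP'.
  destruct s as [a1 a2 a3 a4 a5 a6]; destruct s' as [b1 b2 b3 b4 b5 b6]; simpl in *.
  assert (X1 : b1 * b6 <= a1 * a6) by nra.
  assert (X2 : b3 * b4 <= a3 * a4) by nra.
  assert (X3 : a2 * a5 <= b2 * b5) by nra.
  assert (Y1 : b1 * b6 = a1 * a6) by lra.
  assert (Y2 : b3 * b4 = a3 * a4) by lra.
  assert (Y3 : b2 * b5 = a2 * a5) by lra.
  assert (a1 = b1) by nra. assert (a6 = b6) by nra.
  assert (a3 = b3) by nra. assert (a4 = b4) by nra.
  assert (a2 = b2) by nra. assert (a5 = b5) by nra.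
  subst. reflexivity.
Qed.

Lemma core p12 p13 p14 p23 p24 p34 s nu s' nu' :
  0 < p12 -> 0 < p13 -> 0 < p14 -> 0 < p23 -> 0 < p24 -> 0 < p34 ->
  nsol p12 p13 p14 p23 p24 p34 s nu -> nsol p12 p13 p14 p23 p24 p34 s' nu' -> s = s'.
Proof.
  intros H1 H2 H3 H4 H5 H6 Hs Hs'. destruct (Rle_lt_dec nu nu') as [h|h].
  - apply (core_le p12 p13 p14 p23 p24 p34 s nu s' nu'); auto.
  - apply eq_sym. apply (core_le p12 p13 p14 p23 p24 p34 s' nu' s nu); auto. lra.
Qed.

Definition mk (m1 m2 m3 m4 : R) (k : nat) : R :=
  match k with 0%nat => m1*m2 | 1%nat => m1*m3 | 2%nat => m1*m4 | 3%nat => m2*m3 | 4%nat => m2*m4 | _ => m3*m4 end.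
Definition dPk (k : nat) (x : conf) : R :=
  match k with 0%nat => r34 x | 1%nat => - r24 x | 2%nat => r23 x | 3%nat => r14 x | 4%nat => - r13 x | _ => r12 x end.

Lemma dU m1 m2 m3 m4 k x : (k < 6)%nat -> coord k x <> 0 ->
  partial (Upot m1 m2 m3 m4) k x = - mk m1 m2 m3 m4 k / coord k x ^ 2.
Proof.
  intros Hk H. destruct k as [|[|[|[|[|[|k]]]]]]; try lia; unfold partial, Upot; simpl in *;
  apply is_derive_unique; auto_derive; auto; field; auto.
Qed.
Lemma dI m1 m2 m3 m4 k x : (k < 6)%nat ->
  partial (Imom m1 m2 m3 m4) k x = / (2 * Mtot m1 m2 m3 m4) * (2 * mk m1 m2 m3 m4 k * coord k x).
Proof.
  intros Hk. destruct k as [|[|[|[|[|[|k]]]]]]; try lia; unfold partial, Imom; simpl in *;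
  apply is_derive_unique; auto_derive; auto; ring.
Qed.
Lemma dP k x : (k < 6)%nat -> partial Pcay k x = dPk k x.
Proof.
  intros Hk. destruct k as [|[|[|[|[|[|k]]]]]]; try lia; unfold partial, Pcay; simpl in *;
  apply is_derive_unique; auto_derive; auto; ring.
Qed.

Lemma lag_pos p s k M nu D : 0 < k -> 0 < s -> 0 < M -> p * (/ s ^ 2 - s) = nu * D ->
  - p / (/ k * s) ^ 2 = (-(k^3*M)) * (/ (2*M) * (2*p*(/ k * s))) + (-(nu*k^3)) * (/ k * D).
Proof.
  intros Hk Hs HM E.
  replace ((-(nu*k^3)) * (/ k * D)) with (- k^2 * (nu * D)) by (field; lra).
  rewrite <- E. field. lra.
Qed.
Lemma lag_neg p s k M nu D : 0 < k -> 0 < s -> 0 < M -> p * (/ s ^ 2 - s) = - nu * D ->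
  - p / (/ k * s) ^ 2 = (-(k^3*M)) * (/ (2*M) * (2*p*(/ k * s))) + (-(nu*k^3)) * (- (/ k * D)).
Proof.
  intros Hk Hs HM E.
  replace ((-(nu*k^3)) * (- (/ k * D))) with (- k^2 * (- nu * D)) by (field; lra).
  rewrite <- E. field. lra.
Qed.

Lemma nlag p x k M lam mu D : 0 < k -> 0 < x -> 0 < M -> lam < 0 -> k ^ 3 = - lam / M ->
  - p / x ^ 2 = lam * (/ (2*M) * (2*p*x)) + mu * D ->
  p * (/ (k * x) ^ 2 - k * x) = (- mu / (- lam / M)) * (k * D).
Proof.
  intros Hk Hx HM Hl Hk3 E.
  assert (muD : mu * D = - p / x ^ 2 - lam * (/ (2*M) * (2*p*x))) by lra.
  replace ((- mu / (- lam / M)) * (k * D)) with (- k / (-lam/M) * (mu * D)) by (field; lra).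
  rewrite muD. assert (Hl2 : lam = - k^3 * M) by (rewrite Hk3; field; lra).
  rewrite Hl2. assert (0 < k^3) by (simpl; nra). field. repeat split; try lra.
Qed.

Definition scale (k : R) (x : conf) : conf :=
  mkconf (k * r12 x) (k * r13 x) (k * r14 x) (k * r23 x) (k * r24 x) (k * r34 x).

Lemma Imom_scale m1 m2 m3 m4 k x : Imom m1 m2 m3 m4 (scale k x) = k ^ 2 * Imom m1 m2 m3 m4 x.
Proof. unfold Imom, scale; simpl. ring. Qed.
Lemma Pcay_scale k x : Pcay (scale k x) = k ^ 2 * Pcay x.
Proof. unfold Pcay, scale; simpl. ring. Qed.

Lemma Imom_pos m1 m2 m3 m4 x : 0 < m1 -> 0 < m2 -> 0 < m3 -> 0 < m4 -> 0 < r12 x ->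
  0 < Imom m1 m2 m3 m4 x.
Proof.
  intros. unfold Imom, Mtot.
  apply Rmult_lt_0_compat. apply Rinv_0_lt_compat; lra.
  assert (0 < m1 * m2 * r12 x ^ 2) by (apply Rmult_lt_0_compat; [nra| apply pow_lt; auto]).
  assert (0 <= m1 * m3 * r13 x ^ 2) by (apply Rmult_le_pos; [nra| apply pow2_ge_0]).
  assert (0 <= m1 * m4 * r14 x ^ 2) by (apply Rmult_le_pos; [nra| apply pow2_ge_0]).
  assert (0 <= m2 * m3 * r23 x ^ 2) by (apply Rmult_le_pos; [nra| apply pow2_ge_0]).
  assert (0 <= m2 * m4 * r24 x ^ 2) by (apply Rmult_le_pos; [nra| apply pow2_ge_0]).
  assert (0 <= m3 * m4 * r34 x ^ 2) by (apply Rmult_le_pos; [nra| apply pow2_ge_0]).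
  lra.
Qed.

Lemma crit_eqs m1 m2 m3 m4 x lam mu :
  0 < r12 x -> 0 < r13 x -> 0 < r14 x -> 0 < r23 x -> 0 < r24 x -> 0 < r34 x ->
  (forall k : nat, (k < 6)%nat ->
       partial (Upot m1 m2 m3 m4) k x
       = lam * partial (Imom m1 m2 m3 m4) k x + mu * partial Pcay k x) ->
  forall k, (k < 6)%nat ->
  - mk m1 m2 m3 m4 k / coord k x ^ 2 = lam * (/ (2 * Mtot m1 m2 m3 m4) * (2 * mk m1 m2 m3 m4 k * coord k x)) + mu * dPk k x.
Proof.
  intros S1 S2 S3 S4 S5 S6 Hc k Hk.
  rewrite <- dU, <- dI, <- dP; auto.
  destruct k as [|[|[|[|[|[|k]]]]]]; simpl; try lia; lra.
Qed.

Lemma lam_neg m1 m2 m3 m4 x lam mu :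
  0 < m1 -> 0 < m2 -> 0 < m3 -> 0 < m4 ->
  0 < r12 x -> 0 < r13 x -> 0 < r14 x -> 0 < r23 x -> 0 < r24 x -> 0 < r34 x ->
  Imom m1 m2 m3 m4 x = 1 -> Pcay x = 0 ->
  (forall k : nat, (k < 6)%nat ->
       partial (Upot m1 m2 m3 m4) k x
       = lam * partial (Imom m1 m2 m3 m4) k x + mu * partial Pcay k x) ->
  lam < 0.
Proof.
  intros H1 H2 H3 H4 S1 S2 S3 S4 S5 S6 HI HP Hc.
  pose proof (crit_eqs _ _ _ _ _ _ _ S1 S2 S3 S4 S5 S6 Hc) as E.
  pose proof (E 0%nat ltac:(lia)) as E0. pose proof (E 1%nat ltac:(lia)) as E1.
  pose proof (E 2%nat ltac:(lia)) as E2. pose proof (E 3%nat ltac:(lia)) as E3.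
  pose proof (E 4%nat ltac:(lia)) as E4. pose proof (E 5%nat ltac:(lia)) as E5.
  clear E Hc. cbv beta iota delta [mk coord dPk] in E0, E1, E2, E3, E4, E5.
  assert (HM : 0 < Mtot m1 m2 m3 m4) by (unfold Mtot; lra).
  unfold Imom, Pcay in *. set (M := Mtot m1 m2 m3 m4) in *. clearbody M.
  destruct x as [a1 a2 a3 a4 a5 a6]; cbn [r12 r13 r14 r23 r24 r34] in *.
  assert (HU : m1 * m2 / a1 + m1 * m3 / a2 + m1 * m4 / a3 + m2 * m3 / a4 + m2 * m4 / a5 + m3 * m4 / a6
     = - lam * 2 * (/ (2 * M) * (m1 * m2 * a1 ^ 2 + m1 * m3 * a2 ^ 2 + m1 * m4 * a3 ^ 2 + m2 * m3 * a4 ^ 2 + m2 * m4 * a5 ^ 2 + m3 * m4 * a6 ^ 2))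
       - 2 * mu * (a1 * a6 + a3 * a4 - a2 * a5)).
  { replace (m1 * m2 / a1) with (- (- (m1*m2) / a1 ^ 2) * a1) by (field; lra).
    replace (m1 * m3 / a2) with (- (- (m1*m3) / a2 ^ 2) * a2) by (field; lra).
    replace (m1 * m4 / a3) with (- (- (m1*m4) / a3 ^ 2) * a3) by (field; lra).
    replace (m2 * m3 / a4) with (- (- (m2*m3) / a4 ^ 2) * a4) by (field; lra).
    replace (m2 * m4 / a5) with (- (- (m2*m4) / a5 ^ 2) * a5) by (field; lra).
    replace (m3 * m4 / a6) with (- (- (m3*m4) / a6 ^ 2) * a6) by (field; lra).
    rewrite E0, E1, E2, E3, E4, E5. field. lra. }
  rewrite HI, HP in HU.
  assert (0 < m1 * m2 / a1) by (apply Rdiv_lt_0_compat; nra).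
  assert (0 < m1 * m3 / a2) by (apply Rdiv_lt_0_compat; nra).
  assert (0 < m1 * m4 / a3) by (apply Rdiv_lt_0_compat; nra).
  assert (0 < m2 * m3 / a4) by (apply Rdiv_lt_0_compat; nra).
  assert (0 < m2 * m4 / a5) by (apply Rdiv_lt_0_compat; nra).
  assert (0 < m3 * m4 / a6) by (apply Rdiv_lt_0_compat; nra).
  lra.
Qed.

Lemma cube_root c : 0 < c -> 0 < Rpower c (1/3) /\ Rpower c (1/3) ^ 3 = c.
Proof.
  intros Hc. split.
  - unfold Rpower. apply exp_pos.
  - rewrite <- Rpower_pow by (unfold Rpower; apply exp_pos).
    rewrite Rpower_mult. replace (1/3 * INR 3) with 1 by (simpl; field). apply Rpower_1; auto.
Qed.

Theorem lemma6 (m1 m2 m3 m4 : R) :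
  0 < m1 -> 0 < m2 -> 0 < m3 -> 0 < m4 ->
  exists! x : conf, critical_point m1 m2 m3 m4 x.
Proof.
  intros H1 H2 H3 H4.
  assert (P12 : 0 < m1*m2) by nra. assert (P13 : 0 < m1*m3) by nra.
  assert (P14 : 0 < m1*m4) by nra. assert (P23 : 0 < m2*m3) by nra.
  assert (P24 : 0 < m2*m4) by nra. assert (P34 : 0 < m3*m4) by nra.
  assert (HM : 0 < Mtot m1 m2 m3 m4) by (unfold Mtot; lra).
  destruct (nsol_exists _ _ _ _ _ _ P12 P13 P14 P23 P24 P34) as [s [nu Hs]].
  pose proof Hs as Hs0.
  destruct Hs as (S1&S2&S3&S4&S5&S6&HP&E12&E13&E14&E23&E24&E34).
  set (kap := sqrt (Imom m1 m2 m3 m4 s)).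
  assert (HI : 0 < Imom m1 m2 m3 m4 s) by (apply Imom_pos; auto).
  assert (Hk : 0 < kap) by (apply sqrt_lt_R0; auto).
  assert (Hk2 : kap ^ 2 = Imom m1 m2 m3 m4 s) by (unfold kap; rewrite <- Rsqr_pow2; apply Rsqr_sqrt; lra).
  clearbody kap.
  assert (Hik : 0 < / kap) by (apply Rinv_0_lt_compat; auto).
  exists (scale (/ kap) s). split.
  - unfold critical_point, in_Mplus. cbn [scale r12 r13 r14 r23 r24 r34].
    repeat split; try (apply Rmult_le_pos; lra); try (apply Rmult_lt_0_compat; lra).
    + rewrite Imom_scale. rewrite <- Hk2. field. lra.
    + rewrite Pcay_scale, HP. ring.
    + exists (-(kap^3 * Mtot m1 m2 m3 m4)), (-(nu * kap^3)).
      intros k Hkk. rewrite dU, dI, dP; auto.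
      2:{ destruct k as [|[|[|[|[|[|k]]]]]]; cbn; try lia; apply Rgt_not_eq, Rmult_lt_0_compat; lra. }
      destruct k as [|[|[|[|[|[|k]]]]]]; try lia; cbv beta iota delta [mk coord dPk scale r12 r13 r14 r23 r24 r34].
      * apply lag_pos; auto.
      * apply lag_neg; auto.
      * apply lag_pos; auto.
      * apply lag_pos; auto.
      * apply lag_neg; auto.
      * apply lag_pos; auto.
  - intros x [Hin (T1&T2&T3&T4&T5&T6&[lam [mu Hc]])].
    destruct Hin as (_&_&_&_&_&_&HIx&HPx).
    pose proof (lam_neg _ _ _ _ _ _ _ H1 H2 H3 H4 T1 T2 T3 T4 T5 T6 HIx HPx Hc) as Hl.
    set (c := - lam / Mtot m1 m2 m3 m4).
    assert (Hc0 : 0 < c) by (unfold c; apply Rdiv_lt_0_compat; lra).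
    destruct (cube_root c Hc0) as [Hq Hq3].
    set (q := Rpower c (1/3)) in *. clearbody q.
    pose proof (crit_eqs _ _ _ _ _ _ _ T1 T2 T3 T4 T5 T6 Hc) as E.
    pose proof (E 0%nat ltac:(lia)) as F0. pose proof (E 1%nat ltac:(lia)) as F1.
    pose proof (E 2%nat ltac:(lia)) as F2. pose proof (E 3%nat ltac:(lia)) as F3.
    pose proof (E 4%nat ltac:(lia)) as F4. pose proof (E 5%nat ltac:(lia)) as F5.
    clear E. cbv beta iota delta [mk coord dPk] in F0, F1, F2, F3, F4, F5.
    assert (Hn : nsol (m1*m2) (m1*m3) (m1*m4) (m2*m3) (m2*m4) (m3*m4) (scale q x) (- mu / c)).
    { unfold nsol. cbn [scale r12 r13 r14 r23 r24 r34].
      repeat split; try (apply Rmult_lt_0_compat; lra).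
      - rewrite Pcay_scale, HPx. ring.
      - apply (nlag _ _ _ (Mtot m1 m2 m3 m4) lam mu); auto.
      - rewrite (nlag _ _ _ (Mtot m1 m2 m3 m4) lam mu (- r24 x)); auto. unfold c. ring.
      - apply (nlag _ _ _ (Mtot m1 m2 m3 m4) lam mu); auto.
      - apply (nlag _ _ _ (Mtot m1 m2 m3 m4) lam mu); auto.
      - rewrite (nlag _ _ _ (Mtot m1 m2 m3 m4) lam mu (- r13 x)); auto. unfold c. ring.
      - apply (nlag _ _ _ (Mtot m1 m2 m3 m4) lam mu); auto. }
    pose proof (core _ _ _ _ _ _ _ _ _ _ P12 P13 P14 P23 P24 P34 Hs0 Hn) as Heq.
    assert (Hkq : kap = q).
    { assert (kap ^ 2 = q ^ 2).
      { rewrite Hk2, Heq, Imom_scale, HIx. ring. }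
      nra. }
    rewrite Heq, <- Hkq. destruct x as [a1 a2 a3 a4 a5 a6]. unfold scale. cbn [r12 r13 r14 r23 r24 r34].
    f_equal; field; lra.
Qed.
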